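(* Let $S\subseteq[d]$. Let $\phi_n$ be a decision rule (test) for the hypotheses $H^{\mathcal{I}}_{0,S'}$, and define the decision rule $\phi^{\mathcal{MI}}_n$ by $\phi^{\mathcal{MI}}_n(\emptyset,\alpha)=\phi_n(\emptyset,\alpha)$ and, for $S\neq\emptyset$, $$\phi^{\mathcal{MI}}_n(S,\alpha)=\begin{cases}1&\text{if }\phi_n(S,\alpha)=1\text{ or }\min_{j\in S}\phi_n(S\setminus\{j\},\alpha)=0,\\0&\text{otherwise.}\end{cases}$$ Assume that $\phi_n$ has pointwise asymptotic level and pointwise asymptotic power for $S$ and for all $S\setminus\{j\}$, $j\in S$. Then $\phi^{\mathcal{MI}}_n$ has pointwise asymptotic level for $H^{\mathcal{MI}}_{0,S}$ and pointwise asymptotic power of at least $1-\alpha$, i.e. for all $\alpha\in(0,1)$, $$\inf_{\mathbb{P}\in H^{\mathcal{MI}}_{A,S}}\lim_{n\to\infty}\mathbb{P}(\phi^{\mathcal{MI}}_n(S)=1)\ge1-\alpha.$$ If $\phi_n$ has uniform asymptotic level and power (for $S$ and all $S\setminus\{j\}$, $j\in S$), then $\phi^{\mathcal{MI}}_n$ has uniform asymptotic level and uniform asymptotic power of at least $1-\alpha$ (i.e. the limit and infimum above may be interchanged).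
   Context: Let $\mathcal{P}$ be the family of all distributions of $(E,X,Y)$, $X=(X_1,\dots,X_d)$, induced by structural causal models whose graph is a DAG, which are faithful to that DAG, and in which $E$ is exogenous. For $S\subseteq[d]$, $S$ is invariant if $Y\perp\!\!\!\perp E\mid X_S$; $\mathcal{I}$ is the collection of invariant sets; $S$ is minimally invariant if $S\in\mathcal{I}$ and no proper subset of $S$ is in $\mathcal{I}$; $\mathcal{MI}$ is the collection of minimally invariant sets. The hypotheses $H^{\mathcal{I}}_{0,S}$ and $H^{\mathcal{MI}}_{0,S}$ are the subsets of $\mathcal{P}$ on which $S\in\mathcal{I}$, resp. $S\in\mathcal{MI}$; the alternatives are $H^{\mathcal{I}}_{A,S}=\mathcal{P}\setminus H^{\mathcal{I}}_{0,S}$ and $H^{\mathcal{MI}}_{A,S}=\mathcal{P}\setminus H^{\mathcal{MI}}_{0,S}$. Given observations $\mathcal{D}_n$ (not necessarily independent) of $(X,E,Y)$, a decision rule $\phi_n(S,\mathcal{D}_n,\alpha)\in\{0,1\}$ rejects the hypothesis for $S$ when it equals $1$; dependence on $\mathcal{D}_n$ is suppressed. A test $\psi_n$ of $H_0$ against $H_A=\mathcal{P}\setminus H_0$ has pointwise asymptotic level if for all $\alpha\in(0,1)$, $\sup_{\mathbb{P}\in H_0}\lim_{n\to\infty}\mathbb{P}(\psi_n=1)\le\alpha$, and pointwise asymptotic power if for all $\alpha\in(0,1)$, $\inf_{\mathbb{P}\in H_A}\lim_{n\to\infty}\mathbb{P}(\psi_n=1)=1$; it has uniform asymptotic level (resp.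 power) if the same holds with limit and supremum (resp. infimum) interchanged. Saying $\phi_n$ has level/power ''for $S$'' refers to testing $H^{\mathcal{I}}_{0,S}$ against $H^{\mathcal{I}}_{A,S}$. *)

(* Defs.v *)
From HB Require Import structures.
From mathcomp Require Import all_boot all_order all_algebra.
From mathcomp Require Import all_classical all_reals all_analysis.
Set Implicit Arguments. Unset Strict Implicit. Unset Printing Implicit Defensive.
Import Order.TTheory GRing.Theory Num.Theory.

Local Open Scope classical_set_scope.
Local Open Scope ring_scope.

(* node d : inl i = X_(i+1), inr true = E, inr false = Y *)
Definition node (d : nat) : finType := ('I_d + bool)%type.
Definition nE {d : nat} : node d := inr true.
Definition nY {d : nat} : node d := inr false.
Definition nX {d : nat} (i : 'I_d) : node d := inl i.

Record dag (d : nat) := Dag {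
  edge : rel (node d);                                  (* edge u v : u -> v *)
  dag_acyclic : forall u v, edge u v -> ~~ connect edge v u;
  dag_E_exogenous : forall v, ~~ edge v nE
}.

Definition adj {d} (G : dag d) : rel (node d) :=
  fun u v => edge G u v || edge G v u.

Definition triple_open {d} (G : dag d) (Z : {set node d}) (u v w : node d) : bool :=
  if edge G u v && edge G w v then [exists z in Z, connect (edge G) v z]
  else v \notin Z.

Fixpoint inner_open {d} (G : dag d) (Z : {set node d}) (u v : node d)
  (s : seq (node d)) : bool :=
  match s with
  | [::] => true
  | w :: s' => triple_open G Z u v w && inner_open G Z v w s'
  end.

Definition active_path {d} (G : dag d) (Z : {set node d}) (a b : node d)
  (p : seq (node d)) : bool :=
  [&& path (adj G) a p, last a p == b, uniq (a :: p) &
      match p with [::] => true | v :: s => inner_open G Z a v s end].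

Definition dsep {d} (G : dag d) (a b : node d) (Z : {set node d}) : Prop :=
  ~ exists p : seq (node d), active_path G Z a b p.

Definition Xset {d} (S : {set 'I_d}) : {set node d} := [set nX i | i in S].

(* ci P S stands for "Y _||_ E | X_S" under the distribution P. *)
Section Hyps.
Variables (Dist : Type) (d : nat) (ci : Dist -> {set 'I_d} -> Prop).

Definition H0I (S : {set 'I_d}) : set Dist := [set P | ci P S].

Definition min_inv (P : Dist) (S : {set 'I_d}) : Prop :=
  ci P S /\ forall S' : {set 'I_d}, S' \proper S -> ~ ci P S'.

Definition H0MI (S : {set 'I_d}) : set Dist := [set P | min_inv P S].
End Hyps.

Section Tests.
Variables (R : realType) (dd : measure_display) (T : measurableType dd)
  (Dist : Type) (law : Dist -> nat -> probability T R).
(* law P n : the law of the data D_n under P (on a data space T). *)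

Local Open Scope ereal_scope.

Definition prob_rej (psi : nat -> T -> bool) (P : Dist) (n : nat) : \bar R :=
  law P n [set t | psi n t].

(* psi : alpha -> n -> data -> {0,1}; H0 a subset of the model class Dist,
   the alternative is its complement ~` H0. limits are limsup (level) and
   liminf (power). *)
Definition pw_level (H0 : set Dist) (psi : R -> nat -> T -> bool) : Prop :=
  forall alpha : R, (0 < alpha < 1)%R ->
    ereal_sup [set limn_esup (prob_rej (psi alpha) P) | P in H0] <= alpha%:E.

Definition pw_power_atleast (H0 : set Dist) (psi : R -> nat -> T -> bool)
   (b : R -> \bar R) : Prop :=
  forall alpha : R, (0 < alpha < 1)%R ->
    b alpha <= ereal_inf [set limn_einf (prob_rej (psi alpha) P) | P in ~` H0].

Definition pw_power (H0 : set Dist) (psi : R -> nat -> T -> bool) : Prop :=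
  forall alpha : R, (0 < alpha < 1)%R ->
    ereal_inf [set limn_einf (prob_rej (psi alpha) P) | P in ~` H0] = 1.

Definition unif_level (H0 : set Dist) (psi : R -> nat -> T -> bool) : Prop :=
  forall alpha : R, (0 < alpha < 1)%R ->
    limn_esup (fun n => ereal_sup [set prob_rej (psi alpha) P n | P in H0])
      <= alpha%:E.

Definition unif_power_atleast (H0 : set Dist) (psi : R -> nat -> T -> bool)
   (b : R -> \bar R) : Prop :=
  forall alpha : R, (0 < alpha < 1)%R ->
    b alpha <= limn_einf (fun n => ereal_inf [set prob_rej (psi alpha) P n | P in ~` H0]).

Definition unif_power (H0 : set Dist) (psi : R -> nat -> T -> bool) : Prop :=
  forall alpha : R, (0 < alpha < 1)%R ->
    limn_einf (fun n => ereal_inf [set prob_rej (psi alpha) P n | P in ~` H0]) = 1.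
End Tests.

Definition phiMI {d : nat} {R T : Type} (phi : R -> nat -> {set 'I_d} -> T -> bool)
  (alpha : R) (n : nat) (S : {set 'I_d}) (t : T) : bool :=
  if S == finset.set0 then phi alpha n S t
  else phi alpha n S t || [exists j in S, ~~ phi alpha n (S :\ j) t].

(* Main.v *)
Require Import Defs.
From HB Require Import structures.
From mathcomp Require Import all_boot all_order all_algebra.
From mathcomp Require Import all_classical all_reals all_analysis.
From mathcomp Require Import zify ring lra.
Import Order.TTheory GRing.Theory Num.Theory.
Local Open Scope classical_set_scope.
Local Open Scope ring_scope.

Set Implicit Arguments. Unset Strict Implicit. Unset Printing Implicit Defensive.

Section Graph.
Local Open Scope nat_scope.
Variables (d : nat) (G : dag d).
Notation e := (edge G).

Lemma conn_E x : connect e x nE -> x = nE.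
Proof.
move/connectP => [p pth hl]; move: pth hl; case/lastP: p => [|p y] /=.
  by move=> _ ->.
rewrite rcons_path last_rcons => /andP[_ h] hy.
by move: h; rewrite -hy (negbTE (dag_E_exogenous G _)).
Qed.

Lemma conn_antisym u v : connect e u v -> connect e v u -> u = v.
Proof.
move/connectP => [[|x p] /= pth ->] // vu.
move/andP: pth => [ux px].
have : connect e x u.
  apply: connect_trans vu; apply/connectP; by exists p.
by rewrite (negbTE (dag_acyclic ux)).
Qed.

Definition actf (Z : {set node d}) (f : nat -> node d) (n : nat) :=
 [/\ forall i, i < n -> adj G (f i) (f i.+1),
     forall i, i.+1 < n -> triple_open G Z (f i) (f i.+1) (f i.+2) &
     forall i j, i <= n -> j <= n -> f i = f j -> i = j].

Lemma inner_nth Z x0 u v s :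
  inner_open G Z u v s <->
  (forall i, i < size s -> triple_open G Z (nth x0 (u::v::s) i)
         (nth x0 (u::v::s) i.+1) (nth x0 (u::v::s) i.+2)).
Proof.
elim: s u v => [|w s IH] u v /=; first by split.
split.
  move=> /andP[t /IH h] [|i] //= hi; exact: h.
move=> h; apply/andP; split; first exact: (h 0).
by apply/IH => i hi; apply: (h i.+1).
Qed.

Lemma actA Z a b p : active_path G Z a b p ->
  actf Z (nth a (a::p)) (size p) /\ nth a (a::p) (size p) = b.
Proof.
move=> /and4P[pth /eqP lst un io]; split; last first.
  by rewrite -lst -[size p]/((size (a::p)).-1) nth_last.
split.
- by move=> i hi; move/(pathP a): pth => /(_ i hi).
- move: io; case: p {pth lst un} => [|v s] // /(inner_nth _ a) h i hi.
  by apply: h.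
- move=> i j hi hj; move/(uniqP a): un => h; apply: h; by rewrite inE /=.
Qed.

Lemma nth_f x0 (f : nat -> node d) n i : i <= n ->
  nth x0 (f 0 :: mkseq (fun i => f i.+1) n) i = f i.
Proof. by case: i => //= i hi; rewrite nth_mkseq. Qed.

Lemma actB Z f n : actf Z f n ->
  active_path G Z (f 0) (f n) (mkseq (fun i => f i.+1) n).
Proof.
move=> [hadj htr hinj]; apply/and4P; split.
- apply/(pathP (f 0)) => i; rewrite size_mkseq => hi.
  rewrite nth_f; last exact: ltnW.
  by rewrite nth_mkseq //; apply: hadj.
- by apply/eqP; rewrite (last_nth (f 0)) size_mkseq nth_f.
- apply/(uniqP (f 0)) => i j; rewrite !inE /= size_mkseq => hi hj.
  rewrite ltnS in hi; rewrite ltnS in hj.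
  by rewrite !nth_f //; apply: hinj.
- case E: (mkseq (fun i => f i.+1) n) => [|v s] //.
  apply/(inner_nth _ (f 0)) => i hi; rewrite -E.
  have hs : size s = n.-1 by move: (size_mkseq (fun i => f i.+1) n); rewrite E /= => <-.
  have hn : i.+2 <= n by move: hi; rewrite hs; case: (n).
  rewrite !nth_f //; [exact: htr| exact: ltnW | exact: (ltnW (ltnW hn))].
Qed.

Lemma dsepP a b Z : dsep G a b Z <->
  (forall f n, actf Z f n -> f 0 = a -> f n = b -> False).
Proof.
split.
  by move=> h f n hf h0 hn; apply: h; exists (mkseq (fun i => f i.+1) n); rewrite -h0 -hn; apply: actB.
move=> h [p hp]; have [hf hn] := actA hp; exact: (h _ _ hf erefl hn).
Qed.

Lemma desc_fwd Z f n : actf Z f n -> forall i, i < n -> e (f i) (f i.+1) ->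
  connect e (f i) (f n) \/ exists2 z, z \in Z & connect e (f i) z.
Proof.
move=> [hadj htr _].
suff H : forall k i, i + k.+1 = n -> e (f i) (f i.+1) ->
  connect e (f i) (f n) \/ exists2 z, z \in Z & connect e (f i) z.
  move=> i hi; apply: (H (n - i.+1)); by rewrite addnS -addSn subnKC.
elim=> [|k IH] i hik hi.
  by left; rewrite -hik addn1; apply: connect1.
have hi1 : i.+1 < n by rewrite -hik !addnS !ltnS leq_addr.
have := hadj _ hi1; rewrite /adj; case: (boolP (e (f i.+1) (f i.+2))) => h1 /= h2.
  have hik2 : i.+1 + k.+1 = n by rewrite addSnnS.
  have [c|[z zZ c]] := IH i.+1 hik2 h1.
    by left; apply: connect_trans (connect1 hi) c.
  by right; exists z => //; apply: connect_trans (connect1 hi) c.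
have := htr _ hi1; rewrite /triple_open hi h2 /= => /existsP[z /andP[zZ c]].
by right; exists z => //; apply: connect_trans (connect1 hi) c.
Qed.

Lemma desc_bwd Z f n : actf Z f n -> forall i, i < n -> e (f i.+1) (f i) ->
  connect e (f i.+1) (f 0) \/ exists2 z, z \in Z & connect e (f i.+1) z.
Proof.
move=> [hadj htr _]; elim=> [|i IH] hi h.
  by left; apply: connect1.
have hi' : i < n by apply: ltnW.
have := hadj _ hi'; rewrite /adj; case: (boolP (e (f i.+1) (f i))) => h1 /= h2.
  have [c|[z zZ c]] := IH hi' h1.
    by left; apply: connect_trans (connect1 h) c.
  by right; exists z => //; apply: connect_trans (connect1 h) c.
rewrite orbF in h2; have := htr _ hi; rewrite /triple_open h2 h /= => /existsP[z /andP[zZ c]].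
by right; exists z => //; apply: connect_trans (connect1 h) c.
Qed.

Lemma L1 Z w f n : actf (Z :\ w) f n -> f 0 = nE -> w != nE ->
  ~ connect e w (f n) -> (forall z, z \in Z :\ w -> ~ connect e w z) ->
  actf Z f n.
Proof.
move=> hf h0 wE hwn hwz; have [hadj htr hinj] := hf; split => // i hi.
have := htr _ hi; rewrite /triple_open; case: ifP => col.
  move=> /existsP[z /andP[zZ c]]; apply/existsP; exists z.
  by rewrite c andbT; move: zZ; rewrite in_setD1 => /andP[].
rewrite in_setD1 negb_and negbK => /orP[/eqP fw|->//].
exfalso.
case: (boolP (e (f i.+1) (f i.+2))) => h1.
  have [c|[z zZ c]] := desc_fwd hf hi h1.
    by apply: hwn; rewrite -fw.
  by apply: (hwz z zZ); rewrite -fw.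
have h2 : e (f i.+2) (f i.+1) by move: (hadj _ hi); rewrite /adj (negbTE h1).
have h3 : e (f i.+1) (f i).
  move: (hadj _ (ltnW hi)); rewrite /adj; case: (e (f i) (f i.+1)) col => //=.
  by rewrite h2.
have [c|[z zZ c]] := desc_bwd hf (ltnW hi) h3.
  by move: c; rewrite h0 fw => /conn_E; apply/eqP.
by apply: (hwz z zZ); rewrite -fw.
Qed.


Definition ancZ (Z : {set node d}) x := [exists z in Z, connect e x z].

Lemma ancZ_trans Z x y : connect e x y -> ancZ Z y -> ancZ Z x.
Proof.
move=> c /existsP[z /andP[zZ cz]]; apply/existsP; exists z.
by rewrite zZ (connect_trans c cz).
Qed.

Lemma ancZ_mem (Z : {set node d}) z : z \in Z -> ancZ Z z.
Proof. by move=> zZ; apply/existsP; exists z; rewrite zZ connect0. Qed.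

Lemma surg (Z1 Z' : {set node d}) (f : nat -> node d) n k (g : nat -> node d) m y :
  actf Z1 f n -> Z' \subset Z1 ->
  (forall z, z \in Z1 -> connect e z y || ancZ Z' z) ->
  k <= n ->
  (forall i, i < k -> connect e (f i) y -> ancZ Z' (f i)) ->
  g 0 = f k -> (forall i, i < m -> e (g i) (g i.+1)) ->
  (forall i j, i <= m -> j <= m -> g i = g j -> i = j) ->
  (0 < m -> ~~ ancZ Z' (f k)) -> g m = y ->
  actf Z' (fun i => if i <= k then f i else g (i - k)) (k + m).
Proof.
move=> [fadj ftr finj] sZ hZ1 kn hpre g0 gE ginj hfk gm.
set h := fun i => if i <= k then f i else g (i - k).
have hk i : k <= i -> h i = g (i - k).
  move=> ki; rewrite /h; case: leqP => // ik.
  have -> : i = k by lia.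
  by rewrite subnn g0.
have hl i : i <= k -> h i = f i by rewrite /h => ->.
have gc0 j : j <= m -> connect e (g 0) (g j).
  elim: j => [|j IH] hj; first exact: connect0.
  exact: connect_trans (IH (ltnW hj)) (connect1 (gE _ hj)).
have gcm j : j <= m -> connect e (g j) y.
  move=> hj; rewrite -gm; have := subnK hj; move: (m - j) => t.
  elim: t j {hj} => [|t IH] j ht; first by rewrite add0n in ht; rewrite ht connect0.
  have hj : j < m by lia.
  apply: connect_trans (connect1 (gE _ hj)) (IH j.+1 _); lia.
have gnot j : 0 < j -> j <= m -> ~~ ancZ Z' (g j).
  move=> j0 jm; apply/negP => a; have := hfk (leq_trans j0 jm).
  by rewrite -g0 (ancZ_trans (gc0 _ jm) a).
have noedge u v : e u v -> e v u -> False.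
  by move=> uv vu; move: (dag_acyclic vu); rewrite (connect1 uv).
split.
- move=> i him; case: (ltnP i k) => ik.
    rewrite hl ?(ltnW ik)// hl //; apply: fadj; exact: leq_trans ik kn.
  rewrite hk // hk ?(leqW ik) //.
  have -> : i.+1 - k = (i - k).+1 by lia.
  by rewrite /adj gE //; lia.
- move=> i him; case: (ltnP i.+1 k) => ik.
    rewrite hl ?(ltnW (ltnW ik))// hl ?(ltnW ik) // hl //.
    have := ftr _ (leq_trans ik kn); rewrite /triple_open; case: ifP => col.
      move=> /existsP[z /andP[zZ c]].
      have := hZ1 _ zZ => /orP[zy|az].
        exact: hpre _ ik (connect_trans c zy).
      exact: ancZ_trans c az.
    by apply: contra => /(fintype.subsetP sZ).
  case: (ltnP i k) => ik'.
    have ei : i.+1 = k by lia.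
    have m0 : 0 < m by lia.
    rewrite hl ?(ltnW ik') // hl ?ei // hk; last by lia.
    have -> : k.+1 - k = 1 by lia.
    have e01 := gE 0 m0; rewrite g0 in e01.
    rewrite /triple_open; case: ifP => [/andP[_ h2]|_]; first by exfalso; exact: noedge e01 h2.
    by apply/negP => fZ; have := hfk m0; rewrite ancZ_mem.
  rewrite hk // hk ?(leqW ik') // hk; last by lia.
  have -> : i.+1 - k = (i - k).+1 by lia.
  have -> : i.+2 - k = (i - k).+2 by lia.
  have e1 : e (g (i - k).+1) (g (i - k).+2) by apply: gE; lia.
  rewrite /triple_open; case: ifP => [/andP[_ h2]|_]; first by exfalso; exact: noedge e1 h2.
  apply/negP => gZ; have := gnot (i - k).+1 erefl; rewrite ancZ_mem //.
  by move=> /(_ _)/negP; apply; lia.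
- have mixed i j : i <= k -> k < j -> j <= k + m -> f i = g (j - k) -> False.
    move=> ik kj jm fij.
    have m0 : 0 < m by lia.
    case: (ltnP i k) => ik'.
      have a := hpre _ ik'; rewrite fij in a.
      have hjm : j - k <= m by lia.
      have jk0 : 0 < j - k by lia.
      by move: (gnot _ jk0 hjm); rewrite (a (gcm _ hjm)).
    have ei : i = k by lia.
    rewrite ei -g0 in fij; have := ginj 0 (j - k) _ _ fij; lia.
  move=> i j hi hj; case: (leqP i k) => ik; case: (leqP j k) => jk.
  + rewrite hl // hl //; apply: finj; exact: leq_trans kn.
  + rewrite hl // hk ?(ltnW jk) // => fij; exfalso; exact: mixed fij.
  + rewrite hk ?(ltnW ik) // hl // => fij; exfalso; apply: (mixed j i) => //.
  + rewrite hk ?(ltnW ik) // hk ?(ltnW jk) // => gij.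
    have := ginj _ _ _ _ gij; lia.
Qed.

Lemma key (Z Z' : {set node d}) w0 : nE \notin Z -> Z' \subset Z -> w0 \in Z ->
  w0 \notin Z' -> dsep G nE nY Z -> dsep G nE nY Z' ->
  exists2 w, w \in Z & dsep G nE nY (Z :\ w).
Proof.
move=> EZ sZ w0Z w0Z' sepZ sepZ'.
have sepZf := proj1 (dsepP _ _ _) sepZ.
have sepZ'f := proj1 (dsepP _ _ _) sepZ'.
set Wa := [set w in Z | (w \notin Z') && ~~ (connect e w nY || ancZ Z' w)].
case: (set_0Vmem Wa) => [Wa0 | [w1 w1W]].
- exists w0 => //; apply/dsepP => f n hf f0 fn.
  have hZ1 : forall z, z \in Z :\ w0 -> connect e z nY || ancZ Z' z.
    move=> z; rewrite in_setD1 => /andP[_ zZ].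
    case: (boolP (z \in Z')) => zZ'; first by rewrite ancZ_mem ?orbT.
    apply/negPn/negP => hn.
    have : z \in Wa by rewrite inE zZ zZ' hn.
    by rewrite Wa0 inE.
  have sZ1 : Z' \subset Z :\ w0.
    apply/fintype.subsetP => z zZ'; rewrite in_setD1 (fintype.subsetP sZ _ zZ') andbT.
    by apply/eqP => zw; rewrite -zw zZ' in w0Z'.
  have hend k m (g : nat -> node d) : g 0 = f k ->
      (if k + m <= k then f (k + m) else g (k + m - k)) = g m.
    move=> g0; case: leqP => hkm.
      have m0 : m = 0 by lia.
      by rewrite m0 addn0 g0.
    by have -> : k + m - k = m by lia.
  pose P i := (i <= n) && connect e (f i) nY && ~~ ancZ Z' (f i).
  case: (boolP [exists i : 'I_n.+1, P i]) => hex.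
  + have exP : exists i, P i by case/existsP: hex => i Pi; exists i.
    case: (ex_minnP exP) => k Pk kmin.
    move/andP: Pk => [/andP[kn ck] nak].
    move/connectP: ck => [p pth lp].
    move: lp; case: (shortenP pth) => p' pth' un' _ lp.
    pose g := nth (f k) (f k :: p').
    have hs := @surg (Z :\ w0) Z' f n k g (size p') nY hf sZ1 hZ1 kn.
    apply: (sepZ'f _ (k + size p')).
    * apply: hs => //.
      - move=> i ik ci; case: (boolP (ancZ Z' (f i))) => // nai.
        have : k <= i by apply: kmin; rewrite /P ci nai andbT /=; lia.
        lia.
      - by move=> i hi; move/(pathP (f k)): pth' => /(_ i hi).
      - move=> i j hi hj; move/(uniqP (f k)): un' => h; by apply: h; rewrite unfold_in /= ltnS.
      - by rewrite /g -[size p']/((size (f k :: p')).-1) nth_last /=.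
    * by rewrite /= ?leq0n ?f0.
    * rewrite /= (hend k (size p') g) //.
      by rewrite /g -[size p']/((size (f k :: p')).-1) nth_last /=.
  + have hs := @surg (Z :\ w0) Z' f n n (fun _ => f n) 0 nY hf sZ1 hZ1 (leqnn n).
    apply: (sepZ'f _ (n + 0)).
    * apply: hs => //.
      - move=> i ik ci; case: (boolP (ancZ Z' (f i))) => // nai.
        exfalso; move/negP: hex; apply; apply/existsP.
        exists (Ordinal (ltnW ik : i < n.+1)); rewrite /P /= ci nai andbT; lia.
      - by move=> i j; rewrite !leqn0 => /eqP-> /eqP->.
    * by rewrite /= ?leq0n ?f0.
    * by rewrite /= addn0 leqnn fn.
- case: (@arg_minnP _ w1 (fun w => w \in Wa) (fun w => #|finset (connect e w)|) w1W) => w wW wmin.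
  have wZ : w \in Z by move: wW; rewrite inE => /andP[].
  exists w => //; apply/dsepP => f n hf f0 fn.
  move: wW; rewrite inE => /andP[_ /andP[wZ' hw]].
  apply: (sepZf f n _ f0 fn); apply: (L1 hf f0).
  + by apply/eqP => wE; rewrite -wE wZ in EZ.
  + by rewrite fn => c; rewrite c in hw.
  + move=> z; rewrite in_setD1 => /andP[zw zZ] c.
    case: (boolP (z \in Z')) => zZ'.
      by move: hw; rewrite (ancZ_trans c (ancZ_mem zZ')) orbT.
    have zW : z \in Wa.
      rewrite inE zZ zZ' /=; apply/negP => /orP[zy|az].
        by move: hw; rewrite (connect_trans c zy).
      by move: hw; rewrite (ancZ_trans c az) orbT.
    have := wmin z zW.
    have hp : finset (connect e z) \proper finset (connect e w).
      apply/properP; split.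
        by apply/fintype.subsetP => x; rewrite !inE => zx; apply: connect_trans c zx.
      exists w; first by rewrite inE connect0.
      rewrite inE; apply/negP => zw'.
      by move: zw; rewrite (conn_antisym zw' c) eqxx.
    by rewrite leqNgt (proper_card hp).
Qed.

Lemma inXset (A : {set 'I_d}) i : (nX i \in Xset A) = (i \in A).
Proof. by apply/imsetP/idP => [[j jA [->]]|iA] //; exists i. Qed.

Lemma notXset (A : {set 'I_d}) b : (inr b \in Xset A) = false.
Proof. by apply/imsetP => -[j _ h]. Qed.

Lemma XsetD1 (A : {set 'I_d}) j : Xset (A :\ j) = Xset A :\ nX j.
Proof.
apply/setP => -[i|b]; rewrite in_setD1.
  have -> : (inl i != nX j) = (i != j).
    by congr (~~ _); apply/eqP/eqP => [[]|->].
  by rewrite -[inl i]/(nX i) !inXset in_setD1.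
by rewrite !notXset andbF.
Qed.

Lemma key_set (S S' : {set 'I_d}) : S' \proper S ->
  dsep G nE nY (Xset S) -> dsep G nE nY (Xset S') ->
  exists2 j, j \in S & dsep G nE nY (Xset (S :\ j)).
Proof.
move=> /properP[sS [j jS jS']] h h'.
have j1 : nX j \in Xset S by rewrite inXset.
have j2 : nX j \notin Xset S' by rewrite inXset.
have j0 : nE \notin Xset S by rewrite notXset.
have [w] := @key (Xset S) (Xset S') (nX j) j0 (imsetS _ sS) j1 j2 h h'.
case: w => [i|b]; last by rewrite notXset.
rewrite -[inl i]/(nX i) inXset => iS hd; exists i => //.
by rewrite XsetD1.
Qed.

End Graph.


Section Lim.
Variable R : realType.
Local Open Scope ereal_scope.
Implicit Types (u : nat -> \bar R).

Lemma limn_esupE u : limn_esup u = ereal_inf (range (esups u)).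
Proof. by rewrite limn_esup_lim; apply/cvg_lim => //; exact: cvg_esups_inf. Qed.

Lemma esup_le u (a : R) :
  (forall eps : R, (0 < eps)%R -> exists N, forall n, (N <= n)%N -> u n <= (a + eps)%:E) ->
  limn_esup u <= a%:E.
Proof.
move=> h; rewrite limn_esupE; apply/lee_addgt0Pr => eps eps0.
have [N hN] := h eps eps0.
apply: (@le_trans _ _ (esups u N)); first by apply: ereal_inf_lbound; exists N.
apply: ge_ereal_sup => _ [k /= Nk <-]; rewrite -EFinD; exact: hN.
Qed.

Lemma esup_ge u (a : R) : limn_esup u <= a%:E ->
  forall eps : R, (0 < eps)%R -> exists N, forall n, (N <= n)%N -> u n <= (a + eps)%:E.
Proof.
move=> h eps eps0; rewrite limn_esupE in h.
have : ereal_inf (range (esups u)) < (a + eps)%:E.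
  by apply: le_lt_trans h _; rewrite lte_fin ltrDl.
case/ereal_inf_lt => _ [N _ <-] hN; exists N => n Nn.
apply: le_trans (ltW hN); apply: ereal_sup_ubound; by exists n.
Qed.

Lemma einf_ge u (b : R) :
  (forall eps : R, (0 < eps)%R -> exists N, forall n, (N <= n)%N -> (b - eps)%:E <= u n) ->
  b%:E <= limn_einf u.
Proof.
move=> h; rewrite /limn_einf leeNr -EFinN; apply: esup_le => eps eps0.
have [N hN] := h eps eps0; exists N => n Nn.
by rewrite leeNl -EFinN opprD opprK; exact: hN.
Qed.

Lemma einf_le u (b : R) : b%:E <= limn_einf u ->
  forall eps : R, (0 < eps)%R -> exists N, forall n, (N <= n)%N -> (b - eps)%:E <= u n.
Proof.
rewrite /limn_einf leeNr -EFinN => h eps eps0.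
have [N hN] := esup_ge h eps0; exists N => n Nn.
by have := hN n Nn; rewrite leeNl -EFinN opprD opprK.
Qed.

Lemma ev_all (I : eqType) (s : seq I) (Q : I -> nat -> Prop) :
  (forall j, j \in s -> exists N, forall n, (N <= n)%N -> Q j n) ->
  exists N, forall n, (N <= n)%N -> forall j, j \in s -> Q j n.
Proof.
elim: s => [|x s IH] h; first by exists 0%N.
have [N1 h1] := h x (mem_head _ _).
have [N2 h2] : exists N, forall n, (N <= n)%N -> forall j, j \in s -> Q j n.
  by apply: IH => j js; apply: h; rewrite in_cons js orbT.
exists (maxn N1 N2) => n; rewrite geq_max => /andP[n1 n2] j.
rewrite in_cons => /orP[/eqP->|js]; [exact: h1|exact: h2].
Qed.

Lemma sum_le_const (I : eqType) (s : seq I) (x : I -> \bar R) (eps : R) :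
  (forall j, j \in s -> x j <= eps%:E) -> \sum_(j <- s) x j <= ((size s)%:R * eps)%:E.
Proof.
elim: s => [|j s IH] h; first by rewrite big_nil mul0r.
have {}IH : \sum_(j <- s) x j <= ((size s)%:R * eps)%:E.
  by apply: IH => k ks; apply: h; rewrite in_cons ks orbT.
have hj := h j (mem_head _ _).
rewrite big_cons /= -addn1 natrD mulrDl mul1r addrC EFinD.
exact: leeD.
Qed.

Lemma fin_aux1 (x : \bar R) (a eps : R) : x \is a fin_num ->
  x <= (a + eps)%:E -> (1 - a - eps)%:E <= 1 - x.
Proof. by move=> xf; rewrite -[x]fineK // !lee_fin => h; lra. Qed.

Lemma fin_aux2 (x : \bar R) (eps : R) : x \is a fin_num ->
  (1 - eps)%:E <= x -> 1 - x <= eps%:E.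
Proof. by move=> xf; rewrite -[x]fineK // !lee_fin => h; lra. Qed.

Context d (T : measurableType d).

Lemma union_bound (mu : probability T R) (I : Type) (b : I -> T -> bool) (s : seq I) :
  (forall j, measurable [set t | b j t]) ->
  measurable [set t | has (b^~ t) s] /\
  mu [set t | has (b^~ t) s] <= \sum_(j <- s) mu [set t | b j t].
Proof.
move=> hm; elim: s => [|j s [IHm IHle]].
  have -> : [set t | has (b^~ t) [::]] = set0 by apply/seteqP; split => t //=.
  by rewrite measure0 big_nil.
have -> : [set t | has (b^~ t) (j :: s)] = [set t | b j t] `|` [set t | has (b^~ t) s].
  apply/seteqP; split => t /=; first by move/orP.
  by move=> [h|h]; apply/orP; [left|right].
split; first exact: measurableU.
rewrite big_cons; apply: le_trans (measureU2 _ _ _) _ => //.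
exact: leeD2l.
Qed.

Lemma has_meas (I : Type) (b : I -> T -> bool) (s : seq I) :
  (forall j, measurable [set t | b j t]) ->
  measurable [set t | has (b^~ t) s].
Proof.
move=> hm; elim: s => [|j s IHm].
  have -> : [set t | has (b^~ t) [::]] = set0 by apply/seteqP; split => t //=.
  exact: measurable0.
have -> : [set t | has (b^~ t) (j :: s)] = [set t | b j t] `|` [set t | has (b^~ t) s].
  apply/seteqP; split => t /=; first by move/orP.
  by move=> [h|h]; apply/orP; [left|right].
exact: measurableU.
Qed.

Lemma setCb (b : T -> bool) : [set t | ~~ b t] = ~` [set t | b t].
Proof. by apply/seteqP; split => t /=; move/negP. Qed.

End Lim.


Definition bb {d : nat} {R T : Type} (phi : R -> nat -> {set 'I_d} -> T -> bool)
  a n S (o : option 'I_d) t :=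
  match o with None => phi a n S t | Some j => ~~ phi a n (S :\ j) t end.

Definition sMI {d : nat} (S : {set 'I_d}) : seq (option 'I_d) :=
  None :: (if S == finset.set0 then [::] else map Some (enum S)).

Lemma phiMI_has {d : nat} {R T : Type} (phi : R -> nat -> {set 'I_d} -> T -> bool) a n S t :
  phiMI phi a n S t = has (fun o => bb phi a n S o t) (sMI S).
Proof.
rewrite /phiMI /sMI; case: ifP => _ /=; first by rewrite orbF.
congr (_ || _); rewrite has_map.
apply/existsP/hasP => [[j /andP[jS h]]|[j jS h]]; exists j => //.
  by rewrite mem_enum.
by rewrite -mem_enum jS.
Qed.

Unset Implicit Arguments.

Theorem theorem1 (R : realType) (dd : measure_display) (T : measurableType dd)
  (Dist : Type) (d : nat)
  (G : Dist -> dag d)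
  (ci : Dist -> {set 'I_d} -> Prop)
  (law : Dist -> nat -> probability T R)
  (phi : R -> nat -> {set 'I_d} -> T -> bool)
  (S : {set 'I_d}) :
  (* Markov + faithful: Y _||_ E | X_S'  iff  E, Y d-separated by X_S' in G P *)
  (forall P S', ci P S' <-> dsep (G P) nE nY (Xset S')) ->
  (* decision rules are measurable functions of the data *)
  (forall alpha n S', measurable [set t | phi alpha n S' t]) ->
  ((* pointwise *)
   (pw_level law (H0I ci S) (fun a n => phi a n S) /\
    pw_power law (H0I ci S) (fun a n => phi a n S) /\
    (forall j, j \in S ->
       pw_level law (H0I ci (S :\ j)) (fun a n => phi a n (S :\ j)) /\
       pw_power law (H0I ci (S :\ j)) (fun a n => phi a n (S :\ j)))) ->
   pw_level law (H0MI ci S) (fun a n => phiMI phi a n S) /\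
   pw_power_atleast law (H0MI ci S) (fun a n => phiMI phi a n S)
     (fun a => (1 - a)%:E)) /\
  ((* uniform *)
   (unif_level law (H0I ci S) (fun a n => phi a n S) /\
    unif_power law (H0I ci S) (fun a n => phi a n S) /\
    (forall j, j \in S ->
       unif_level law (H0I ci (S :\ j)) (fun a n => phi a n (S :\ j)) /\
       unif_power law (H0I ci (S :\ j)) (fun a n => phi a n (S :\ j)))) ->
   unif_level law (H0MI ci S) (fun a n => phiMI phi a n S) /\
   unif_power_atleast law (H0MI ci S) (fun a n => phiMI phi a n S)
     (fun a => (1 - a)%:E)).
Proof.
Proof.
move=> hci hmeas.
have mb a n o : measurable [set t | bb phi a n S o t].
  case: o => [j|] /=; last exact: hmeas.
  by rewrite setCb; apply: measurableC.
have eMI a n : [set t | phiMI phi a n S t] = [set t | has (fun o => bb phi a n S o t) (sMI S)].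
  by apply/seteqP; split => t; rewrite /= phiMI_has.
have mMI a n : measurable [set t | phiMI phi a n S t].
  by rewrite eMI; exact: has_meas.
have finl P n A : measurable A -> law P n A \is a fin_num.
  by move=> mA; apply: fin_num_measure.
have lowS a n P : (law P n [set t | phi a n S t] <= law P n [set t | phiMI phi a n S t])%E.
  apply: le_measure; rewrite ?inE; [exact: hmeas|exact: mMI|].
  by move=> t /=; rewrite phiMI_has /sMI /= => ->.
have lowj a n P j : j \in S ->
    (1 - law P n [set t | phi a n (S :\ j) t] <= law P n [set t | phiMI phi a n S t])%E.
  move=> jS; rewrite -probability_setC; last exact: hmeas.
  rewrite -setCb; apply: le_measure; rewrite ?inE; [|exact: mMI|].
    by rewrite setCb; apply: measurableC.
  move=> t /= h; rewrite phiMI_has /sMI.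
  have -> : (S == finset.set0) = false by apply/negbTE/set0Pn; exists j.
  by rewrite /= has_map; apply/orP; right; apply/hasP; exists j; rewrite ?mem_enum.
have up a n P (eps : R) : 0 < eps ->
    (law P n [set t | phi a n S t] <= (a + eps)%:E)%E ->
    (forall j, j \in S -> ((1 - eps)%:E <= law P n [set t | phi a n (S :\ j) t])%E) ->
    (law P n [set t | phiMI phi a n S t] <= (a + eps * (1 + #|S|%:R))%:E)%E.
  move=> e0 h0 hj; rewrite eMI.
  apply: le_trans (@union_bound _ _ _ (law P n) _ (fun o => bb phi a n S o) (sMI S) (mb a n)).2 _.
  rewrite /sMI big_cons /=.
  have -> : a + eps * (1 + #|S|%:R) = (a + eps) + #|S|%:R * eps by ring.
  rewrite EFinD; apply: leeD => //.
  case: ifP => _.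
    by rewrite big_nil lee_fin mulr_ge0 // ltW.
  rewrite big_map cardE; apply: sum_le_const => j; rewrite mem_enum => jS /=.
  rewrite setCb probability_setC; last exact: hmeas.
  apply: fin_aux2; [exact: finl|exact: hj].
have graph P : ~ H0MI ci S P -> ~ ci P S \/ exists2 j, j \in S & ci P (S :\ j).
  move=> hP; case: (pselect (ci P S)) => c; last by left.
  right.
  have [S' [pS cS']] : exists S' : {set 'I_d}, S' \proper S /\ ci P S'.
    apply: contrapT => hn; apply: hP; split => // S' pS cS'; apply: hn; by exists S'.
  have [j jS hd] := key_set pS (proj1 (hci P S) c) (proj1 (hci P S') cS').
  by exists j => //; apply/hci.
have minv_j P j : H0MI ci S P -> j \in S -> ~ ci P (S :\ j).
  by move=> h jS; apply: h.2; exact: properD1.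
have c0 : 0 < 1 + #|S|%:R :> R by rewrite (lt_le_trans ltr01) // lerDl.
split.
- move=> [lvS [pwS hj]]; split.
  + move=> a a01; apply: ge_ereal_sup => _ [P HP <-].
    apply: esup_le => eps eps0.
    pose e' := eps / (1 + #|S|%:R).
    have e'0 : 0 < e' by rewrite divr_gt0.
    have hS : (limn_esup (prob_rej law (fun n => phi a n S) P) <= a%:E)%E.
      apply: le_trans (lvS a a01); apply: ereal_sup_ubound; exists P => //; exact: HP.1.
    have [N0 hN0] := esup_ge hS e'0.
    have [N1 hN1] : exists N, forall n, (N <= n)%N -> forall j, j \in enum S ->
        ((1 - e')%:E <= law P n [set t | phi a n (S :\ j) t])%E.
      apply: ev_all => j; rewrite mem_enum => jS.
      have hj1 : (1%:E <= limn_einf (prob_rej law (fun n => phi a n (S :\ j)) P))%E.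
        rewrite -((hj j jS).2 a a01); apply: ereal_inf_lbound; exists P => //.
        exact: minv_j.
      by have [N hN] := einf_le hj1 e'0; exists N => n Nn; exact: hN.
    exists (maxn N0 N1) => n; rewrite geq_max => /andP[n0 n1].
    have hh : forall j, j \in S -> ((1 - e')%:E <= law P n [set t | phi a n (S :\ j) t])%E.
      by move=> j jS; apply: hN1 => //; rewrite mem_enum.
    apply: le_trans (up a n P e' e'0 (hN0 n n0) hh) _.
    by rewrite /e' divfK // gt_eqF.
  + move=> a /andP[a0 a1]; apply: le_ereal_inf_tmp => _ [P HP <-].
    apply: einf_ge => eps eps0.
    case: (graph P HP) => [nc | [j jS cj]].
    * have h1 : (1%:E <= limn_einf (prob_rej law (fun n => phi a n S) P))%E.
        by rewrite -(pwS a (introT andP (conj a0 a1))); apply: ereal_inf_lbound; exists P.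
      have [N hN] := einf_le h1 eps0; exists N => n Nn; apply: le_trans (lowS a n P).
      by apply: le_trans (hN n Nn); rewrite lee_fin; lra.
    * have h1 : (limn_esup (prob_rej law (fun n => phi a n (S :\ j)) P) <= a%:E)%E.
        apply: le_trans ((hj j jS).1 a (introT andP (conj a0 a1))).
        by apply: ereal_sup_ubound; exists P.
      have [N hN] := esup_ge h1 eps0; exists N => n Nn; apply: le_trans (lowj a n P j jS).
      by apply: fin_aux1; [apply: finl; exact: hmeas|exact: hN].
- move=> [lvS [pwS hj]]; split.
  + move=> a a01; apply: esup_le => eps eps0.
    pose e' := eps / (1 + #|S|%:R).
    have e'0 : 0 < e' by rewrite divr_gt0.
    have [N0 hN0] := esup_ge (lvS a a01) e'0.
    have [N1 hN1] : exists N, forall n, (N <= n)%N -> forall j, j \in enum S ->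
      ((1 - e')%:E <= ereal_inf [set prob_rej law (fun n => phi a n (S :\ j)) P n | P in ~` H0I ci (S :\ j)])%E.
      apply: ev_all => j; rewrite mem_enum => jS.
      apply: einf_le e'0; by rewrite ((hj j jS).2 a a01).
    exists (maxn N0 N1) => n; rewrite geq_max => /andP[n0 n1].
    apply: ge_ereal_sup => _ [P HP <-].
    have hh : forall j, j \in S -> ((1 - e')%:E <= law P n [set t | phi a n (S :\ j) t])%E.
      move=> j jS; apply: le_trans (hN1 n n1 j _) _; first by rewrite mem_enum.
      apply: ereal_inf_lbound; exists P => //; exact: minv_j.
    have h0 : (law P n [set t | phi a n S t] <= (a + e')%:E)%E.
      apply: le_trans (hN0 n n0); apply: ereal_sup_ubound; exists P => //; exact: HP.1.
    apply: le_trans (up a n P e' e'0 h0 hh) _.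
    by rewrite /e' divfK // gt_eqF.
  + move=> a /andP[a0 a1]; apply: einf_ge => eps eps0.
    have a01 : 0 < a < 1 by apply/andP.
    have h1 : (1%:E <= limn_einf (fun n => ereal_inf [set prob_rej law (fun n => phi a n S) P n | P in ~` H0I ci S]))%E.
      by rewrite (pwS a a01).
    have [N0 hN0] := einf_le h1 eps0.
    have [N1 hN1] : exists N, forall n, (N <= n)%N -> forall j, j \in enum S ->
       (ereal_sup [set prob_rej law (fun n => phi a n (S :\ j)) P n | P in H0I ci (S :\ j)] <= (a + eps)%:E)%E.
      apply: ev_all => j; rewrite mem_enum => jS.
      by have [N hN] := esup_ge ((hj j jS).1 a a01) eps0; exists N => n Nn; exact: hN.
    exists (maxn N0 N1) => n; rewrite geq_max => /andP[n0 n1].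
    apply: le_ereal_inf_tmp => _ [P HP <-].
    case: (graph P HP) => [nc | [j jS cj]].
    * apply: le_trans (lowS a n P).
      apply: (@le_trans _ _ (1 - eps)%:E); first by rewrite lee_fin; lra.
      apply: le_trans (hN0 n n0) _; apply: ereal_inf_lbound; by exists P.
    * apply: le_trans (lowj a n P j jS).
      apply: fin_aux1; first by apply: finl; exact: hmeas.
      have := hN1 n n1 j; rewrite mem_enum => /(_ jS); apply: le_trans.
      by apply: ereal_sup_ubound; exists P.
Qed.
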